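(* Let $m_1,\ldots,m_n\ge 2$ be integers, let $\mathcal{B}\subseteq\{0,1\}^n$, and let $G=\mathrm{NEPS}(K_{m_1},\ldots,K_{m_n};\mathcal{B})$, where $K_m$ is the complete graph on $m$ vertices. Then for all vertices $v,w\in V(G)$ and every integer $r\ge0$, $$w_{G}(r,v,w)=\sum_{(\beta_1,\ldots,\beta_{r})\in \mathcal{B}^{r}}\ \prod_{t=1}^{n} a_{t},$$ where $\beta_\ell=(\beta_{\ell1},\ldots,\beta_{\ell n})$, $\ell_t:=\beta_{1t}+\cdots+\beta_{rt}$, and $$a_{t}=\begin{cases}\frac{m_t-1}{m_t}\big((m_{t}-1)^{\ell_t-1}-(-1)^{\ell_t-1}\big) & \text{if } \pi_{t}(v)=\pi_t(w),\\[1mm] \frac{1}{m_t}\big((m_{t}-1)^{\ell_t}-(-1)^{\ell_t}\big) & \text{if } \pi_{t}(v)\neq\pi_t(w),\end{cases}$$ with $\pi_t$ the projection onto the $t$-th coordinate.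
   Context: Given $\mathcal{B}\subseteq\{0,1\}^n$ and graphs $G_1,\ldots,G_n$, $\mathrm{NEPS}(G_1,\ldots,G_n;\mathcal{B})$ is the graph with vertex set $V(G_1)\times\cdots\times V(G_n)$, in which $(x_1,\ldots,x_n)$ and $(y_1,\ldots,y_n)$ are adjacent iff there is $(\alpha_1,\ldots,\alpha_n)\in\mathcal{B}$ such that $x_i=y_i$ whenever $\alpha_i=0$, and $x_i,y_i$ are distinct and adjacent in $G_i$ whenever $\alpha_i=1$. $w_G(r,v,w)$ is the number of walks of length $r$ from $v$ to $w$ in $G$ (with $w_G(0,v,w)=1$ if $v=w$, $0$ otherwise). *)

(* Defs.v *)
From HB Require Import structures.
From mathcomp Require Import all_boot all_order all_algebra.
Set Implicit Arguments. Unset Strict Implicit. Unset Printing Implicit Defensive.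
Import Order.TTheory GRing.Theory Num.Theory.

(* NEPS(G_1,...,G_n; B): vertex set is the dependent product of the T i;
   B is a set of 0/1 vectors indexed by 'I_n (true = 1). *)
Definition neps_adj (n : nat) (T : 'I_n -> finType) (e : forall i, rel (T i))
  (B : {set {ffun 'I_n -> bool}}) : rel {dffun forall i : 'I_n, T i} :=
  fun x y => [exists alpha in B,
    [forall i, if alpha i then (x i != y i) && e i (x i) (y i)
               else x i == y i]].

Definition complete_rel (m : nat) : rel 'I_m := fun x y => x != y.

Definition walk_count (V : finType) (e : rel V) (r : nat) (v w : V) : nat :=
  #|[set p : {ffun 'I_r.+1 -> V} |
      [&& p ord0 == v, p ord_max == w &
          [forall j : 'I_r, e (p (widen_ord (leqnSn r) j)) (p (lift ord0 j))]]]|.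

(* Main.v *)
Require Import Defs.
From mathcomp Require Import all_boot all_order all_algebra.
From mathcomp Require Import ring.
Set Implicit Arguments. Unset Strict Implicit. Unset Printing Implicit Defensive.
Import Order.TTheory GRing.Theory Num.Theory.


Definition ext (X : Type) r (g : {ffun 'I_r -> X}) (x : X) : {ffun 'I_r.+1 -> X} :=
  [ffun i => if unlift ord_max i is Some j then g j else x].

Lemma ext_lift X r (g : {ffun 'I_r -> X}) x j : ext g x (lift ord_max j) = g j.
Proof. by rewrite ffunE liftK. Qed.
Lemma ext_max X r (g : {ffun 'I_r -> X}) x : ext g x ord_max = x.
Proof. by rewrite ffunE unlift_none. Qed.

Lemma big_ext (R : Type) (idx : R) (op : Monoid.com_law idx) (X : finType) r
  (G : {ffun 'I_r.+1 -> X} -> R) :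
  \big[op/idx]_(f : {ffun 'I_r.+1 -> X}) G f =
  \big[op/idx]_(g : {ffun 'I_r -> X}) \big[op/idx]_(x : X) G (ext g x).
Proof.
rewrite pair_big /= (reindex (fun p : {ffun 'I_r -> X} * X => ext p.1 p.2)) //.
apply: onW_bij.
exists (fun f : {ffun 'I_r.+1 -> X} => ([ffun j => f (lift ord_max j)], f ord_max)).
  by case=> g x /=; rewrite ext_max; congr pair; apply/ffunP=> j; rewrite ffunE ext_lift.
move=> f /=; apply/ffunP=> i; rewrite ffunE.
by case: unliftP => [j ->|->]; rewrite ?ffunE.
Qed.

Lemma widen_lift n (i : 'I_n) : widen_ord (leqnSn n) i = lift ord_max i.
Proof. by apply/val_inj; rewrite /= /bump leqNgt ltn_ord. Qed.

Lemma lift0_liftmax n (k : 'I_n) :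
  lift ord0 (lift ord_max k) = lift ord_max (lift ord0 k) :> 'I_n.+2.
Proof. apply/val_inj => /=; rewrite /bump; have nk : (n <= k) = false by rewrite leqNgt ltn_ord.
by rewrite nk add0n leq0n add1n ltnS nk. Qed.

Lemma lift0_max n : lift ord0 (ord_max : 'I_n.+1) = ord_max :> 'I_n.+2.
Proof. by apply/val_inj. Qed.

Lemma ord0_lift n : (ord0 : 'I_n.+2) = lift ord_max (ord0 : 'I_n.+1).
Proof. by apply/val_inj; rewrite /= /bump. Qed.

Lemma cards_sum (T : finType) (P : pred T) : #|[set p | P p]| = (\sum_p (P p : nat))%N.
Proof.
rewrite -sum1_card big_mkcond /=; apply: eq_bigr => p _; rewrite inE; by case: (P p).
Qed.

Lemma big_ffun0 (R : Type) (idx : R) (op : Monoid.law idx) (X : finType)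
  (G : {ffun 'I_0 -> X} -> R) :
  \big[op/idx]_(g : {ffun 'I_0 -> X}) G g = G (ffun0 (card_ord 0)).
Proof. by rewrite (big_pred1 (ffun0 (card_ord 0))) // => g /=; apply/esym/eqP/ffunP=> -[]. Qed.

Lemma ext0 X (g : {ffun 'I_0 -> X}) x i : ext g x i = x.
Proof. by rewrite ffunE; case: unliftP => // -[]. Qed.

Lemma walk0 (V : finType) (e : rel V) v w : walk_count e 0 v w = (v == w).
Proof.
rewrite /walk_count cards_sum big_ext big_ffun0.
rewrite (bigD1 v) //= big1 => [|x /negbTE xv]; rewrite !ext0 ?xv //.
rewrite eqxx /= addn0 (_ : [forall j : 'I_0, _] = true) ?andbT //; by apply/forallP => -[].
Qed.

Lemma forall_split r (F : pred 'I_r.+1) :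
  [forall j, F j] = [forall k : 'I_r, F (lift ord_max k)] && F ord_max.
Proof.
apply/forallP/andP => [H|[/forallP H1 H2] j]; first by split => //; apply/forallP.
by case: (unliftP ord_max j) => [k ->|->].
Qed.

Lemma walkS (V : finType) (e : rel V) r v w :
  walk_count e r.+1 v w = (\sum_u walk_count e r v u * e u w)%N.
Proof.
rewrite /walk_count cards_sum big_ext.
under [RHS]eq_bigr do rewrite cards_sum big_distrl.
rewrite [RHS]exchange_big /=; apply: eq_bigr => q _.
set W := [forall k : 'I_r, e (q (widen_ord (leqnSn r) k)) (q (lift ord0 k))].
have key x : [&& ext q x ord0 == v, ext q x ord_max == w &
     [forall j : 'I_r.+1, e (ext q x (widen_ord (leqnSn r.+1) j))
                             (ext q x (lift ord0 j))]]
   = [&& q ord0 == v, x == w, W & e (q ord_max) x].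
  rewrite forall_split widen_lift lift0_max !ext_lift ext_max.
  have -> : [forall k : 'I_r, e (ext q x (widen_ord (leqnSn r.+1) (lift ord_max k)))
                              (ext q x (lift ord0 (lift ord_max k)))] = W.
    by apply: eq_forallb => k; rewrite widen_lift lift0_liftmax !ext_lift widen_lift.
  rewrite ord0_lift ext_lift.
  by case: (q _ == v); case: (x == w); case: W.
under eq_bigr do rewrite key.
rewrite (bigD1 w) //= big1 => [|x /negbTE ->]; last by rewrite andbF.
rewrite (bigD1 (q ord_max)) //= big1 => [|u /negbTE uq]; last first.
  by rewrite [q ord_max == u]eq_sym uq andbF.
rewrite eqxx !addn0.
clear key; clearbody W; rewrite eqxx /=; by case: (q ord0 == v); case: W; case: (e _ w).
Qed.
Local Open Scope ring_scope.

Lemma dep_distr n (T : 'I_n -> finType) (H : forall t, T t -> rat) :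
 \sum_(u : {dffun forall t, T t}) \prod_t H t (u t) = \prod_t \sum_(x : T t) H t x.
Proof.
rewrite (reindex (@dffun_of_fprod _ T)); last exact/onW_bij/dffun_of_fprod_bij.
under eq_bigr do under eq_bigr do rewrite ffunE.
have := @big_fprod rat 0 1 *%R +%R _ T (fun t => [ffun x => H t x]).
rewrite /=. move=> E. rewrite (_ : \sum_(u : fprod T) \prod_t H t (u t) = \sum_(u : fprod T) \prod_(t in 'I_n) [ffun x => H t x] (u t)); last first.
  by apply: eq_bigr => u _; apply: eq_bigr => t _; rewrite ffunE.
rewrite E.
rewrite [RHS](_ : _ = \prod_t \sum_(j in tagged_with T t) untag 0 [ffun y => H t y] j); last first.
  apply: eq_bigr => t _; rewrite (big_tag (fun t y => H t y)); apply: eq_bigr => x _.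
  by rewrite /untag; case: eqP => // e; rewrite ffunE.
rewrite bigA_distr_big_dep.
by apply: eq_big => // f; apply: eq_bigr => i _.
Qed.
Definition fK (M : nat) (k : nat) (b : bool) : rat :=
  if b then ((M%:R - 1) ^+ k + (M%:R - 1) * (-1) ^+ k) / M%:R
  else ((M%:R - 1) ^+ k - (-1) ^+ k) / M%:R.

Definition Sm (M : nat) (b : bool) (a c : 'I_M) : rat :=
  if b then (a != c)%:R else (a == c)%:R.

Lemma conv M (hM : (1 < M)%N) k (b : bool) (a c : 'I_M) :
  \sum_x fK M k (a == x) * Sm b x c = fK M (k + b) (a == c).
Proof.
have M0 : M%:R != 0 :> rat by rewrite pnatr_eq0 -lt0n ltnW.
case: b; rewrite /Sm; last first.
  rewrite addn0 (bigD1 c) //= eqxx mulr1 big1 ?addr0 // => x /negbTE ->.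
  by rewrite mulr0.
have -> : \sum_x fK M k (a == x) * (x != c)%:R = \sum_x fK M k (a == x) - fK M k (a == c).
  rewrite [X in _ = X - _](bigD1 c) //= (bigD1 c) //= eqxx mulr0 add0r addrC addrK.
  by apply: eq_bigr => x /negbTE ->; rewrite mulr1.
rewrite (bigD1 a) //= eqxx.
under eq_bigr => x xa do rewrite eq_sym (negbTE xa).
rewrite sumr_const cardC1 card_ord.
have -> : (fK M k false *+ M.-1) = (M%:R - 1) * fK M k false.
  by rewrite -[LHS]mulr_natl -subn1 natrB // ltnW.
rewrite (_ : (k + true)%N = k.+1) ?addn1 //.
case: (a == c); rewrite /fK !exprS; field; exact: M0.
Qed.

Lemma fK_stmt M (hM : (1 < M)%N) k (b : bool) : fK M k b =
  (let M' : rat := M%:R in let lt : int := k%:Z in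
   if b then (M' - 1) / M' * ((M' - 1) ^ (lt - 1) - (-1) ^ (lt - 1))
   else 1 / M' * ((M' - 1) ^ lt - (-1) ^ lt)).
Proof.
have M0 : M%:R != 0 :> rat by rewrite pnatr_eq0 -lt0n ltnW.
have M1 : M%:R - 1 != 0 :> rat.
  by rewrite subr_eq0 -[1]/(1%:R) eqr_nat neq_ltn hM orbT.
rewrite /fK /=; case: b; last by rewrite -!exprnP; field.
case: k => [|k].
  rewrite sub0r !exprN1 !expr0 invrN1; field; by rewrite M0 M1.
have -> : (k.+1%:Z - 1 = k%:Z) by rewrite intS addrC addKr.
rewrite -!exprnP !exprS; field; exact: M0.
Qed.
Lemma adj_sum n (m : 'I_n -> nat) (B : {set {ffun 'I_n -> bool}})
  (u w : {dffun forall t : 'I_n, 'I_(m t)}) :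
  ((neps_adj (fun t => @complete_rel (m t)) B u w)%:R : rat) =
  \sum_(alpha in B) \prod_t Sm (alpha t) (u t) (w t).
Proof.
pose a0 : {ffun 'I_n -> bool} := [ffun t => u t != w t].
have H (alpha : {ffun 'I_n -> bool}) : \prod_t Sm (alpha t) (u t) (w t) = (alpha == a0)%:R.
  case: eqP => [->|].
    by apply: big1 => t _; rewrite /Sm ffunE; case: eqP.
  move=> ne; have [t At] : exists t, alpha t != a0 t.
    case/boolP: [exists t, alpha t != a0 t] => [/existsP // | /existsPn H].
    by case: ne; apply/ffunP => t; apply/eqP/negPn/H.
  rewrite (bigD1 t) //= [Sm _ _ _](_ : _ = 0) ?mul0r //.
  by move: At; rewrite /Sm ffunE; case: (alpha t); case: (u t == w t).
under eq_bigr do rewrite H.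
rewrite big_mkcond (bigD1 a0) //= big1 => [|x /negbTE ->]; last by case: (x \in B).
rewrite eqxx addr0.
have -> : neps_adj (fun t => @complete_rel (m t)) B u w = (a0 \in B).
  apply/existsP/idP => [[alpha /andP[aB /forallP Ha]]|ha0].
    suff <- : alpha = a0 by [].
    apply/ffunP => t; rewrite ffunE; have := Ha t; rewrite /complete_rel.
    by case: (alpha t); [rewrite andbb | move/eqP ->; rewrite eqxx].
  exists a0; rewrite ha0 /=; apply/forallP => t; rewrite ffunE /complete_rel.
  by case: eqP.
by case: (a0 \in B).
Qed.

Lemma claim n (m : 'I_n -> nat) (hm : forall t, (1 < m t)%N)
  (B : {set {ffun 'I_n -> bool}})
  (v : {dffun forall t : 'I_n, 'I_(m t)}) r w :
  ((walk_count (neps_adj (fun t => @complete_rel (m t)) B) r v w)%:R : rat) =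
  \sum_(beta : {ffun 'I_r -> {ffun 'I_n -> bool}} | [forall l, beta l \in B])
    \prod_t fK (m t) (\sum_(l < r) (beta l t : nat))%N (v t == w t).
Proof.
elim: r w => [|r IH] w.
  rewrite walk0 big_mkcond big_ffun0 /=.
  rewrite (_ : [forall l, _] = true); last by apply/forallP => -[].
  have f0 t (b : bool) : fK (m t) 0 b = b%:R.
    have M0 : (m t)%:R != 0 :> rat by rewrite pnatr_eq0 -lt0n ltnW.
    by rewrite /fK !expr0; case: b; [rewrite mulr1 addrC subrK divff | rewrite subrr mul0r].
  under eq_bigr do rewrite big_ord0 f0.
  case: (v =P w) => [->|ne]; first by symmetry; apply: big1 => t _; rewrite eqxx.
  have [t At] : exists t, v t != w t.
    case/boolP: [exists t, v t != w t] => [/existsP // | /existsPn H].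
    by case: ne; apply/ffunP => t; apply/eqP/negPn/H.
  by rewrite (bigD1 t) //= (negbTE At) mul0r.
rewrite walkS natr_sum.
under eq_bigr => u _ do rewrite natrM IH adj_sum mulr_suml.
under eq_bigr => u _ do under eq_bigr => beta _ do rewrite mulr_sumr.
rewrite exchange_big /=.
under eq_bigr => beta _ do rewrite exchange_big /=.
under eq_bigr => beta _ do under eq_bigr => alpha _ do under eq_bigr => u _ do rewrite -big_split /=.
under eq_bigr => beta _ do under eq_bigr => alpha _ do rewrite (@dep_distr n (fun t => 'I_(m t)) (fun t x => fK (m t) (\sum_(l < r) beta l t) (v t == x) * Sm (alpha t) x (w t))).
under eq_bigr => beta _ do under eq_bigr => alpha _ do under eq_bigr => t _ do rewrite conv //.
rewrite [RHS]big_mkcond big_ext /= [LHS]big_mkcond.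
apply: eq_bigr => beta _.
have E x : [forall l, ext beta x l \in B] = [forall l, beta l \in B] && (x \in B).
  by rewrite forall_split ext_max; congr andb; apply: eq_forallb => l; rewrite ext_lift.
have E2 x t : (\sum_(l < r.+1) ext beta x l t)%N = (\sum_(l < r) beta l t + x t)%N.
  rewrite big_ord_recr /= ext_max; congr (_ + _)%N.
  by apply: eq_bigr => l _; rewrite widen_lift ext_lift.
under [RHS]eq_bigr => x _ do rewrite E.
under [RHS]eq_bigr => x _ do under eq_bigr => t _ do rewrite E2.
case: ifP => PB /=; last by rewrite big1.
by rewrite big_mkcond.
Qed.

Theorem corollary3p2 (n : nat) (m : 'I_n -> nat) (hm : forall t, (1 < m t)%N)
  (B : {set {ffun 'I_n -> bool}})
  (v w : {dffun forall t : 'I_n, 'I_(m t)}) (r : nat) :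
  ((walk_count (neps_adj (fun t => @complete_rel (m t)) B) r v w)%:R : rat) =
  \sum_(beta : {ffun 'I_r -> {ffun 'I_n -> bool}} | [forall l, beta l \in B])
    \prod_(t < n)
      (let M : rat := (m t)%:R in
       let lt : int := (\sum_(l < r) (beta l t : nat))%N%:Z in
       if v t == w t then
         (M - 1) / M * ((M - 1) ^ (lt - 1) - (-1) ^ (lt - 1))
       else
         1 / M * ((M - 1) ^ lt - (-1) ^ lt)).
Proof.
rewrite claim //; apply: eq_bigr => beta _; apply: eq_bigr => t _.
by rewrite fK_stmt.
Qed.
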